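(* Let $\{\mathbb{G}_n,\ n=2,3,\ldots\}$ be a sequence of random graphs as described in the context, with $\lim_{n\to\infty}|V_n|=\infty$, and assume the homogeneity condition: for each $n$, $D_{n,k}$ has the same distribution as $D_{n,1}$ for all $k\in V_n$, and for all distinct $k,\ell\in V_n$ the pair $(D_{n,k},D_{n,\ell})$ has the same joint distribution as $(D_{n,1},D_{n,2})$. Fix $d\in\{0,1,2,\ldots\}$. Then there exists a constant $L(d)\in\mathbb{R}$ with $P_n(d)\to L(d)$ in probability as $n\to\infty$ if and only if $$\lim_{n\to\infty}\mathbb{P}[D_{n,1}=d]=L(d)\quad\text{and}\quad \lim_{n\to\infty}\mathrm{Cov}\big[\mathbf{1}[D_{n,1}=d],\mathbf{1}[D_{n,2}=d]\big]=0.$$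
   Context: All random variables are defined on a common probability space $(\Omega,\mathcal{F},\mathbb{P})$. For each $n=2,3,\ldots$, $\mathbb{G}_n$ is a random (possibly directed, self-loops allowed) graph on the deterministic finite node set $V_n=\{1,\ldots,k_n\}$ with $k_n\ge 2$, determined by $\{0,1\}$-valued edge random variables $\{\chi_n(k,\ell),\ k,\ell\in V_n\}$ ($\chi_n(k,\ell)=1$ iff there is an edge from $k$ to $\ell$). The degree of node $k$ is $D_{n,k}=\sum_{\ell\in V_n}\chi_n(k,\ell)$. For $d=0,1,\ldots$, $N_n(d)=\sum_{k\in V_n}\mathbf{1}[D_{n,k}=d]$ and $P_n(d)=N_n(d)/|V_n|$ is the fraction of nodes with degree $d$. *)

(* Defs.v *)
From HB Require Import structures.
From mathcomp Require Import all_boot all_order all_algebra.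
From mathcomp Require Import all_classical all_reals all_analysis.
Set Implicit Arguments. Unset Strict Implicit. Unset Printing Implicit Defensive.
Import Order.TTheory GRing.Theory Num.Theory.

(* A random graph on node set 'I_M (node i+1 of the
   paper is the ordinal i) is given by boolean edge variables chi k l : T -> bool. *)

Definition degree {T : Type} {M : nat} (chi : 'I_M -> 'I_M -> T -> bool)
  (k : 'I_M) (w : T) : nat := (\sum_(l < M) chi k l w)%N.

Definition Ncount {T : Type} {M : nat} (chi : 'I_M -> 'I_M -> T -> bool)
  (d : nat) (w : T) : nat := (\sum_(k < M) (degree chi k w == d))%N.

Definition Pfrac {R : realType} {T : Type} {M : nat}
  (chi : 'I_M -> 'I_M -> T -> bool) (d : nat) (w : T) : R :=
  ((Ncount chi d w)%:R / M%:R)%R.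

Definition node2 (m : nat) : 'I_m.+2 := @Ordinal m.+2 1 isT.

(* Main.v *)
Require Import Defs.
From HB Require Import structures.
From mathcomp Require Import all_boot all_order all_algebra.
From mathcomp Require Import all_classical all_reals all_analysis.
From mathcomp Require Import ring lra.
Import Order.TTheory GRing.Theory Num.Theory.
Import numFieldNormedType.Exports.
Local Open Scope classical_set_scope.
Local Open Scope ring_scope.

Set Implicit Arguments.
Unset Strict Implicit.

Lemma c_alg (R : realType) (p q L x : R) : 0 <= p <= 1 -> 0 < x -> x <= 1/2 ->
  0 <= p * (1 - p) * x + (1 - x) * (q - p ^+ 2) ->
  `|q - p ^+ 2| <= 2 * ((p - L) ^+ 2 + p * (1 - p) * x + (1 - x) * (q - p ^+ 2)) + 2 * x.
Proof.
move=> /andP[p0 p1] x0 x2 V.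
have pa : 0 <= p * (1 - p) by apply: mulr_ge0; lra.
have pb : p * (1 - p) <= 1.
  by rewrite mulrBr mulr1; have := mulr_ge0 p0 p0; lra.
have hL : 0 <= (p - L) ^+ 2 by exact: sqr_ge0.
have hc : - x <= (1 - x) * (q - p ^+ 2).
  have h1 : 0 <= 1 - p * (1 - p) by lra.
  have := mulr_ge0 (ltW x0) h1; lra.
rewrite ler_norml; apply/andP; split.
  case: (lerP 0 (q - p ^+ 2)) => hc0; first nra.
  nra.
case: (lerP (q - p ^+ 2) 0) => hc0; first nra.
nra.
Qed.

Lemma e_alg (R : realType) (p c L x : R) : 0 <= p <= 1 -> 0 < x -> x <= 1/2 ->
  (p - L) ^+ 2 + p * (1 - p) * x + (1 - x) * c <= (p - L) ^+ 2 + x + `|c|.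
Proof.
move=> /andP[p0 p1] x0 x2.
have pa : 0 <= p * (1 - p) by apply: mulr_ge0; lra.
have pb : p * (1 - p) <= 1.
  by rewrite mulrBr mulr1; have := mulr_ge0 p0 p0; lra.
have := ler_norm c; have := normr_ge0 c; nra.
Qed.

Section helpers.
Context (dT : measure_display) (T : measurableType dT) (R : realType) (P : probability T R).

Lemma Lfun_bounded (f : T -> R) (c r : R) : 1 <= r ->
  measurable_fun setT f -> (forall x, `|f x| <= c) -> f \in Lfun P r%:E.
Proof.
move=> r1 mf fc.
rewrite inE; apply/andP; split; rewrite inE //=.
rewrite /finite_norm unlock poweR_lty//.
have -> : (fun x => `|(EFin \o f) x| `^ r)%E = (fun x => (`|f x| `^ r)%:E).
  by apply/funext => x; rewrite /comp -poweR_EFin.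
apply: (le_lt_trans (y := (\int[P]_x (c `^ r)%:E)%E)).
  apply: ge0_le_integral => //.
  - apply/measurable_realfun.measurable_EFinP.
    apply/(@measurableT_comp _ _ _ _ _ _ (@powR R ^~ r)) => //.
    exact: measurableT_comp.
  - move=> x _; rewrite lee_fin /=; apply: ge0_ler_powR; rewrite ?nnegrE //.
    + by rewrite (le_trans _ r1).
    + by rewrite (le_trans _ (fc x)).
rewrite integral_cst//.
rewrite lte_mul_pinfty // ?lee_fin ?powR_ge0 //. by rewrite ltey_eq fin_num_measure.
Qed.

Definition BM (f : T -> R) := measurable_fun setT f /\ exists c : R, forall x, `|f x| <= c.

Lemma BM_Lfun f r : 1 <= r -> BM f -> f \in Lfun P r%:E.
Proof. by move=> r1 [mf [c fc]]; exact: Lfun_bounded r1 mf fc. Qed.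

Lemma BM_cst a : BM (cst a).
Proof. by split; [exact: measurable_cst | exists `|a| => x]. Qed.

Lemma BM_indic A : measurable A -> BM (\1_A).
Proof.
move=> mA; split; first exact: measurable_realfun.measurable_indic.
by exists 1 => x; rewrite indicE; case: (x \in A); rewrite ?normr1 ?normr0.
Qed.

Lemma BM_add f g : BM f -> BM g -> BM (fun x => f x + g x).
Proof.
move=> [mf [c fc]] [mg [c' gc]]; split; first exact: measurable_realfun.measurable_funD.
by exists (c + c') => x; rewrite (le_trans (ler_normD _ _)) // lerD.
Qed.

Lemma BM_mul f g : BM f -> BM g -> BM (fun x => f x * g x).
Proof.
move=> [mf [c fc]] [mg [c' gc]]; split; first exact: measurable_realfun.measurable_funM.
by exists (c * c') => x; rewrite normrM ler_pM.
Qed.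

Lemma BM_sum (I : Type) (s : seq I) (F : I -> T -> R) :
  (forall i, BM (F i)) -> BM (fun x => \sum_(i <- s) F i x).
Proof.
move=> H; elim: s => [|i s IH].
  have -> : (fun x => \sum_(i <- [::]) F i x) = cst 0.
    by apply/funext => x; rewrite big_nil.
  exact: BM_cst.
have -> : (fun x => \sum_(j <- i :: s) F j x) = (fun x => F i x + \sum_(j <- s) F j x).
  by apply/funext => x; rewrite big_cons.
exact: BM_add.
Qed.

Local Open Scope ereal_scope.

Lemma E_add f g : BM f -> BM g -> 'E_P[(fun x => f x + g x)%R] = 'E_P[f] + 'E_P[g].
Proof. by move=> bf bg; apply: expectationD; apply: BM_Lfun. Qed.

Lemma E_scale a f : BM f -> 'E_P[(fun x => a * f x)%R] = a%:E * 'E_P[f].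
Proof.
move=> bf; have -> : (fun x => a * f x)%R = (a \o* f)%R.
  by apply/funext => x; rewrite /= mulrC.
by apply: expectationZl; apply: BM_Lfun.
Qed.

Lemma E_sum (I : Type) (s : seq I) (F : I -> T -> R) :
  (forall i, BM (F i)) ->
  'E_P[(fun x => \sum_(i <- s) F i x)%R] = \sum_(i <- s) 'E_P[F i].
Proof.
move=> H; elim: s => [|i s IH].
  have -> : (fun x => \sum_(i <- [::]) F i x)%R = cst 0%R.
    by apply/funext => x; rewrite big_nil.
  by rewrite expectation_cst big_nil.
have -> : (fun x => \sum_(j <- i :: s) F j x)%R = (fun x => F i x + \sum_(j <- s) F j x)%R.
  by apply/funext => x; rewrite big_cons.
by rewrite E_add ?IH ?big_cons //; apply: BM_sum.
Qed.

Lemma E_fin f : BM f -> 'E_P[f] = (fine 'E_P[f])%:E.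
Proof. by move=> bf; rewrite fineK // expectation_fin_num // BM_Lfun. Qed.

Lemma P_fin A : measurable A -> P A = (fine (P A))%:E.
Proof. by move=> mA; rewrite fineK // fin_num_measure. Qed.

End helpers.

Section graph.
Context (dT : measure_display) (T : measurableType dT) (R : realType) (P : probability T R).
Context (M' : nat) (chi : 'I_M'.+2 -> 'I_M'.+2 -> T -> bool)
  (chi_meas : forall k l, measurable [set w | chi k l w]) (d : nat)
  (h1 : forall (k : 'I_M'.+2) (a : nat),
     P [set w | degree chi k w = a] = P [set w | degree chi ord0 w = a])
  (h2 : forall (k l : 'I_M'.+2), k != l -> forall a b : nat,
     P [set w | degree chi k w = a /\ degree chi l w = b] =
     P [set w | degree chi ord0 w = a /\ degree chi (node2 M') w = b]).

Definition Aset k := [set w | degree chi k w = d].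

Lemma mdeg k : measurable_fun setT (fun w => (degree chi k w)%:R : R).
Proof.
have -> : (fun w => (degree chi k w)%:R : R) =
    (fun w => \sum_(l < M'.+2) (\1_[set w | chi k l w] w : R)).
  apply/funext => w; rewrite /degree natr_sum; apply: eq_bigr => l _.
  rewrite indicE; case: (boolP (chi k l w)) => h.
    by rewrite mem_set.
  by rewrite memNset //=; apply/negP.
by apply: measurable_sum => l; exact: measurable_realfun.measurable_indic.
Qed.

Lemma mA k : measurable (Aset k).
Proof.
have := mdeg k measurableT (@measurable_set1 R (d%:R)) .
rewrite setTI; congr measurable; apply/seteqP; split => w /=.
  by move/eqP; rewrite eqr_nat => /eqP.
by rewrite /Aset /= => ->.
Qed.


Definition pp := fine (P (Aset ord0)).
Definition qq := fine (P (Aset ord0 `&` Aset (node2 M'))).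
Definition rr k l := fine (P (Aset k `&` Aset l)).

Lemma PA k : P (Aset k) = pp%:E.
Proof. by rewrite /Aset h1 -P_fin //; exact: mA. Qed.

Lemma PAA k l : k != l -> P (Aset k `&` Aset l) = qq%:E.
Proof.
move=> kl.
have -> : Aset k `&` Aset l = [set w | degree chi k w = d /\ degree chi l w = d] by [].
rewrite h2 // /qq -P_fin //; apply: measurableI; exact: mA.
Qed.

Lemma rr_diag k : rr k k = pp.
Proof. by rewrite /rr setIid PA. Qed.

Lemma rr_off k l : k != l -> rr k l = qq.
Proof. by move=> kl; rewrite /rr PAA. Qed.

Lemma pp01 : (0 <= pp <= 1)%R.
Proof.
apply/andP; split; first by apply: fine_ge0; exact: measure_ge0.
rewrite -[1%R]/(fine 1%E); apply: fine_le => //.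
  by apply: fin_num_measure; exact: mA.
exact: probability_le1 (mA ord0).
Qed.

Lemma Y_eq w : Pfrac chi d w = (\sum_(k < M'.+2) (\1_(Aset k) w : R)) / (M'.+2)%:R.
Proof.
rewrite /Pfrac /Ncount natr_sum; congr (_ / _); apply: eq_bigr => k _.
rewrite indicE; case: (eqVneq (degree chi k w) d) => h.
  by rewrite mem_set.
by rewrite memNset //=; apply/eqP.
Qed.


Definition Wf (L : R) k w := ((\1_(Aset k) w : R) - L) / (M'.+2)%:R.

Lemma YL_sq L w : (Pfrac chi d w - L) ^+ 2 =
  \sum_(k < M'.+2) \sum_(l < M'.+2) Wf L k w * Wf L l w.
Proof.
have -> : Pfrac chi d w - L = \sum_(k < M'.+2) Wf L k w.
  rewrite Y_eq /Wf -mulr_suml sumrB sumr_const card_ord.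
  have hM : (M'.+2)%:R != 0 :> R by rewrite pnatr_eq0.
  by rewrite mulrBl -[L *+ _]mulr_natr mulfK.
rewrite GRing.expr2 mulr_suml; apply: eq_bigr => k _; by rewrite mulr_sumr.
Qed.

Lemma BM_W L k : BM (Wf L k).
Proof.
rewrite /Wf; apply: (@BM_mul _ _ _ (fun w => \1_(Aset k) w - L) (cst (M'.+2)%:R^-1)); last exact: BM_cst.
apply: BM_add; first exact/BM_indic/mA.
exact: BM_cst.
Qed.


Ltac nz M' := apply/negP => /eqP; have := ler0n _ M'; lra.

Ltac bm := repeat first [ apply: BM_sum | intro | apply: BM_add | apply: BM_mul | exact: BM_cst | apply: BM_indic | apply: measurableI | exact: mA | apply: BM_W ].

Lemma E_WW L k l : ('E_P[(fun w => Wf L k w * Wf L l w)%R])%E =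
  ((rr k l - 2 * L * pp + L ^+ 2) / (M'.+2)%:R ^+ 2)%:E.
Proof.
have hM : (M'.+2)%:R != 0 :> R by rewrite pnatr_eq0.
set m := (M'.+2)%:R : R.
have -> : (fun w => Wf L k w * Wf L l w) = (fun w => (m ^+ 2)^-1 * \1_(Aset k `&` Aset l) w
   + ((- L / m ^+ 2) * \1_(Aset k) w + ((- L / m ^+ 2) * \1_(Aset l) w + cst (L ^+ 2 / m ^+ 2) w))).
  apply/funext => w; rewrite /Wf indicI /=; field; nz M'.
rewrite E_add; [|bm|bm].
rewrite E_add; [|bm|bm].
rewrite E_add; [|bm|bm].
rewrite !E_scale; try by bm.
rewrite !expectation_indic; try by bm.
rewrite expectation_cst !PA (@P_fin _ _ _ P (Aset k `&` Aset l)); last by apply: measurableI; exact: mA.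
rewrite -!EFinM -!EFinD; congr EFin; rewrite /rr; field; nz M'.
Qed.

Definition ee L := (pp - L) ^+ 2 + pp * (1 - pp) / (M'.+2)%:R
  + (1 - ((M'.+2)%:R)^-1) * (qq - pp ^+ 2).

Lemma E_sq L : ('E_P[(fun w => (Pfrac chi d w - L) ^+ 2)%R])%E = (ee L)%:E.
Proof.
have hM : (M'.+2)%:R != 0 :> R by rewrite pnatr_eq0.
have -> : (fun w => (Pfrac chi d w - L) ^+ 2) =
  (fun w => \sum_(k < M'.+2) \sum_(l < M'.+2) Wf L k w * Wf L l w).
  by apply/funext => w; rewrite YL_sq.
rewrite E_sum; last by move=> k; apply: BM_sum => l; bm.
rewrite (eq_bigr (fun k => \sum_(l < M'.+2)
   ((rr k l - 2 * L * pp + L ^+ 2) / (M'.+2)%:R ^+ 2)%:E)); last first.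
  move=> k _; rewrite E_sum; last by move=> l; bm.
  by apply: eq_bigr => l _; exact: E_WW.
under eq_bigr do rewrite sumEFin.
rewrite sumEFin; congr EFin.
have hk k : \sum_(l < M'.+2) ((rr k l - 2 * L * pp + L ^+ 2) / (M'.+2)%:R ^+ 2) =
   (pp + (M'.+1)%:R * qq + (M'.+2)%:R * (L ^+ 2 - 2 * L * pp)) / (M'.+2)%:R ^+ 2.
  rewrite -mulr_suml; congr (_ / _).
  rewrite (bigD1 k) //= rr_diag.
  rewrite (eq_bigr (fun _ => qq - 2 * L * pp + L ^+ 2)); last first.
    by move=> l lk; rewrite rr_off // eq_sym.
  rewrite sumr_const cardC1 card_ord /= -mulr_natl.
  rewrite -[(M'.+2)%:R]natr1; ring.
rewrite (eq_bigr _ (fun k _ => hk k)) sumr_const card_ord -mulr_natl /ee.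
rewrite -[(M'.+2)%:R]natr1 -[(M'.+1)%:R]natr1.
field; nz M'.
Qed.

Lemma cov_eq : covariance P (\1_(Aset ord0) : T -> R) (\1_(Aset (node2 M')) : T -> R) =
  (qq - pp ^+ 2)%:E.
Proof.
have eAB : (\1_(Aset ord0) * \1_(Aset (node2 M')))%R = \1_(Aset ord0 `&` Aset (node2 M')) :> (T -> R).
  by apply/funext => w; rewrite indicI.
rewrite covarianceE; first last.
- rewrite eAB; apply: BM_Lfun => //; bm.
- apply: BM_Lfun => //; bm.
- apply: BM_Lfun => //; bm.
rewrite eAB !expectation_indic; try by bm.
rewrite !PA /qq (@P_fin _ _ _ P (Aset ord0 `&` Aset (node2 M'))); last by bm.
by rewrite -EFinM -EFinB GRing.expr2.
Qed.


Lemma Y01 w : (0 <= (Pfrac chi d w : R) <= 1)%R.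
Proof.
have hM : (0 < (M'.+2)%:R :> R)%R by rewrite ltr0n.
have hN : (Ncount chi d w <= M'.+2)%N.
  rewrite /Ncount -[X in (_ <= X)%N]card_ord -sum1_card.
  by apply: leq_sum => k _; exact: leq_b1.
rewrite /Pfrac divr_ge0 ?ler0n //= ler_pdivrMr // mul1r ler_nat //.
Qed.

Lemma BM_Y : BM (Pfrac chi d : T -> R).
Proof.
have -> : (Pfrac chi d : T -> R) = (fun w => (\sum_(k < M'.+2) (\1_(Aset k) w : R)) * cst ((M'.+2)%:R^-1) w).
  by apply/funext => w; rewrite Y_eq.
bm.
Qed.

Lemma mB (eps L : R) : measurable [set w | (eps < `|Pfrac chi d w - L|)%R].
Proof.
have mf : measurable_fun setT (fun w => `|Pfrac chi d w - L|%R).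
  apply: measurableT_comp => //; apply: measurable_realfun.measurable_funD.
    by case: BM_Y.
  exact: measurable_cst.
have := mf measurableT _ (@measurable_itv R `]eps, +oo[).
rewrite setTI; congr measurable; apply/seteqP; split => w /=; by rewrite in_itv /= andbT.
Qed.

Lemma sq_le_norm (e z : R) : (0 <= e -> e <= `|z| -> e ^+ 2 <= z ^+ 2)%R.
Proof.
move=> e0 ez; rewrite -[z ^+ 2]real_normK ?num_real //.
by rewrite ler_sqr ?nnegrE.
Qed.

Lemma sq_norm_le (e z : R) : (`|z| <= e -> z ^+ 2 <= e ^+ 2)%R.
Proof.
move=> ez; rewrite -[z ^+ 2]real_normK ?num_real //.
by rewrite ler_sqr ?nnegrE // (le_trans _ ez).
Qed.

Lemma ee_split (L : R) : ee L = ((pp - L) ^+ 2 + ee pp)%R.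
Proof. rewrite /ee; ring. Qed.

Lemma ee_ge0 (L : R) : (0 <= ee L)%R.
Proof.
rewrite -lee_fin -E_sq; apply: expectation_ge0 => w; exact: sqr_ge0.
Qed.

Ltac bm2 := repeat first [ exact: BM_Y | apply: BM_sum | intro | apply: BM_add | apply: BM_mul | exact: BM_cst | apply: BM_indic | apply: measurableI | exact: mA | apply: BM_W | exact: BM_Y | exact: mB ].

Lemma BM_sq (L : R) : BM (fun w => (Pfrac chi d w - L) ^+ 2)%R.
Proof.
have -> : (fun w => (Pfrac chi d w - L) ^+ 2)%R = (fun w => (Pfrac chi d w + cst (- L) w) * (Pfrac chi d w + cst (-L) w))%R.
  by apply/funext => w; rewrite GRing.expr2.
bm2.
Qed.

Lemma markov_ee (eps L : R) : (0 < eps)%R ->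
  ((eps ^+ 2)%:E * P [set w | (eps < `|Pfrac chi d w - L|)%R] <= (ee L)%:E)%E.
Proof.
move=> e0.
rewrite -E_sq -expectation_indic; last exact: mB.
rewrite -E_scale; last by apply: BM_indic; exact: mB.
apply: expectation_le.
- have : BM (fun w => eps ^+ 2 * \1_[set w | (eps < `|Pfrac chi d w - L|)%R] w)%R by bm2.
  by case.
- by case: (BM_sq L).
- by move=> w; rewrite indicE mulr_ge0 ?ler0n ?exprn_ge0 // ltW.
- by move=> w; exact: sqr_ge0.
- apply/aeW => w; rewrite indicE; case: (boolP (w \in _)) => h.
    rewrite mulr1; apply: sq_le_norm; first exact: ltW.
    by move: h; rewrite inE => /ltW.
  by rewrite mulr0 sqr_ge0.
Qed.


Lemma cheb_rev (eps L : R) : (0 < eps)%R ->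
  (ee L <= eps ^+ 2 + (1 + `|L|) ^+ 2 * fine (P [set w | (eps < `|Pfrac chi d w - L|)%R]))%R.
Proof.
move=> e0.
rewrite -lee_fin -E_sq.
have -> : ((eps ^+ 2 + (1 + `|L|) ^+ 2 * fine (P [set w | (eps < `|Pfrac chi d w - L|)%R]))%:E =
  'E_P[(fun w => cst (eps ^+ 2) w + (1 + `|L|) ^+ 2 * \1_[set w | (eps < `|Pfrac chi d w - L|)%R] w)%R])%E.
  rewrite E_add; [|bm2|bm2].
  rewrite [X in (_ + X)%E]E_scale; last by bm2.
  rewrite expectation_cst expectation_indic; last exact: mB.
  rewrite EFinD (EFinM ((1 + `|L|) ^+ 2)) fineK // fin_num_measure //; exact: mB.
apply: expectation_le.
- by case: (BM_sq L).
- have : BM (fun w => cst (eps ^+ 2) w + (1 + `|L|) ^+ 2 * \1_[set w | (eps < `|Pfrac chi d w - L|)%R] w)%R by bm2.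
  by case.
- by move=> w; exact: sqr_ge0.
- move=> w; rewrite indicE; apply: addr_ge0; first exact: sqr_ge0.
  by apply: mulr_ge0; [exact: sqr_ge0 | exact: ler0n].
- apply/aeW => w /=.
  have /andP[y0 y1] := Y01 w.
  case: (ltrP eps `|Pfrac chi d w - L|) => h.
    rewrite indicE mem_set // mulr1.
    have : (`|Pfrac chi d w - L| <= 1 + `|L|)%R.
      by rewrite (le_trans (ler_normB _ _)) // lerD2r ger0_norm.
    move/sq_norm_le => hh; apply: (le_trans hh).
    by rewrite lerDr sqr_ge0.
  rewrite indicE memNset /=; last by apply/negP; rewrite -leNgt.
  by rewrite mulr0 addr0; apply: sq_norm_le.
Qed.

Lemma c_bound (L : R) : (`|qq - pp ^+ 2| <= 2 * ee L + 2 * (M'.+2)%:R^-1)%R.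
Proof.
rewrite /ee; apply: c_alg.
- exact: pp01.
- by rewrite invr_gt0 ltr0n.
- have hM2 : (2 <= (M'.+2)%:R :> R)%R by rewrite ler_nat.
  rewrite -div1r ler_pdivrMr ?ltr0n //; lra.
- have := ee_ge0 pp; rewrite /ee subrr expr0n /= add0r; done.
Qed.

Lemma e_bound (L : R) : (ee L <= (pp - L) ^+ 2 + (M'.+2)%:R^-1 + `|qq - pp ^+ 2|)%R.
Proof.
rewrite /ee; apply: e_alg.
- exact: pp01.
- by rewrite invr_gt0 ltr0n.
- have hM2 : (2 <= (M'.+2)%:R :> R)%R by rewrite ler_nat.
  rewrite -div1r ler_pdivrMr ?ltr0n //; lra.
Qed.

End graph.

Section an.
Context (R : realType).

Lemma cvg0_le (u v : nat -> R) : (\forall n \near \oo, `|u n| <= v n) ->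
  v @ \oo --> 0 -> u @ \oo --> 0.
Proof.
move=> H hv; apply/cvgr0Pnorm_le => e e0.
have H2 : \forall t \near \oo, `|v t| <= e by apply: (proj1 (cvgr0Pnorm_le v) hv).
apply: (filterS2 _ _ H H2) => n /= h1 h2.
exact: le_trans h1 (le_trans (ler_norm _) h2).
Qed.

Lemma cvg0D (u v : nat -> R) : u @ \oo --> 0 -> v @ \oo --> 0 ->
  (fun n => u n + v n) @ \oo --> 0.
Proof. by move=> hu hv; rewrite -[0]addr0; apply: cvgD. Qed.

Lemma cvg0M (u v : nat -> R) : u @ \oo --> 0 -> v @ \oo --> 0 ->
  (fun n => u n * v n) @ \oo --> 0.
Proof. by move=> hu hv; rewrite -[0](mulr0 (0:R)); apply: cvgM. Qed.

Lemma cvg0Mc (a : R) (u : nat -> R) : u @ \oo --> 0 ->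
  (fun n => a * u n) @ \oo --> 0.
Proof. move=> hu; have h := cvgM (@cvg_cst _ a nat \oo _) hu; rewrite mulr0 in h; exact: h. Qed.

Lemma cvg0N (u : nat -> R) : u @ \oo --> 0 -> (fun n => `|u n|) @ \oo --> 0.
Proof. move=> hu; have h := cvg_norm hu; rewrite normr0 in h; exact: h. Qed.

Lemma EFin_cvgE (u : nat -> R) (a : R) :
  (fun n => (u n)%:E) @ \oo --> a%:E <-> u @ \oo --> a.
Proof.
rewrite fine_cvgP; split => [[_ h] //|h]; split => //.
by near=> n.
Unshelve. all: by end_near.
Qed.

Lemma invM0 (m : nat -> nat) : (forall N : nat, \forall n \near \oo, (N <= (m n).+2)%N) ->
  (fun n => ((m n).+2)%:R^-1 : R) @ \oo --> 0.
Proof.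
move=> V; apply/cvgr0Pnorm_le => e e0.
have := V (Num.truncn (e^-1)).+1.
apply: filterS => n hn.
rewrite ger0_norm ?invr_ge0 ?ler0n //.
rewrite -(invrK e) lef_pV2 ?posrE ?invr_gt0 ?ltr0n //.
apply: ltW; apply: (lt_le_trans (Num.Theory.truncnS_gt _)).
by rewrite ler_nat.
Qed.

End an.


Lemma norm_le_of_sq (R : realType) (z dl : R) : 0 <= dl -> z ^+ 2 <= dl ^+ 2 -> `|z| <= dl.
Proof.
move=> d0 h; rewrite -ler_sqr ?nnegrE //; by rewrite real_normK ?num_real.
Qed.

Unset Implicit Arguments.

Theorem proposition1 (dT : measure_display) (T : measurableType dT)
  (R : realType) (P : probability T R)
  (m : nat -> nat)
  (chi : forall n : nat, 'I_(m n).+2 -> 'I_(m n).+2 -> T -> bool)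
  (chi_meas : forall n k l, measurable [set w | chi n k l w])
  (V_unbounded : forall N : nat, \forall n \near \oo, (N <= (m n).+2)%N)
  (homog1 : forall n (k : 'I_(m n).+2) (a : nat),
     P [set w | degree (chi n) k w = a] = P [set w | degree (chi n) ord0 w = a])
  (homog2 : forall n (k l : 'I_(m n).+2), k != l -> forall a b : nat,
     P [set w | degree (chi n) k w = a /\ degree (chi n) l w = b] =
     P [set w | degree (chi n) ord0 w = a /\ degree (chi n) (node2 (m n)) w = b])
  (d : nat) (L : R) :
  (forall eps : R, 0 < eps ->
     (fun n => P [set w | eps < `| Pfrac (chi n) d w - L |]) @ \oo --> 0%E)
  <->
  ((fun n => P [set w | degree (chi n) ord0 w = d]) @ \oo --> L%:E /\
   (fun n => covariance P
       (\1_[set w | degree (chi n) ord0 w = d] : T -> R)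
       (\1_[set w | degree (chi n) (node2 (m n)) w = d] : T -> R)) @ \oo --> 0%E).
Proof.
pose p := fun n => pp P (chi n) d.
pose q := fun n => qq P (chi n) d.
pose e := fun n => ee P (chi n) d L.
have G1 : (fun n => P [set w | degree (chi n) ord0 w = d]) = (fun n => (p n)%:E).
  by apply/funext => n; exact: (PA (chi_meas n) d (homog1 n) ord0).
have G2 : (fun n => covariance P
       (\1_[set w | degree (chi n) ord0 w = d] : T -> R)
       (\1_[set w | degree (chi n) (node2 (m n)) w = d] : T -> R)) =
    (fun n => (q n - p n ^+ 2)%:E).
  by apply/funext => n; exact: (cov_eq (chi_meas n) d (homog1 n)).
have mBn (eps : R) n : measurable [set w | eps < `| Pfrac (chi n) d w - L |].
  exact: (mB (chi_meas n)).
have G3 (eps : R) : (fun n => P [set w | eps < `| Pfrac (chi n) d w - L |]) =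
    (fun n => (fine (P [set w | eps < `| Pfrac (chi n) d w - L |]))%:E).
  by apply/funext => n; rewrite fineK // fin_num_measure.
have hM : (fun n => ((m n).+2)%:R^-1 : R) @ \oo --> 0 := invM0 V_unbounded.
have eb n : e n <= (p n - L) ^+ 2 + ((m n).+2)%:R^-1 + `|q n - p n ^+ 2|.
  exact: (e_bound P (chi_meas n) d L).
have eg n : 0 <= e n := ee_ge0 (chi_meas n) d (homog1 n) (homog2 n) L.
have es n : (p n - L) ^+ 2 <= e n.
  rewrite /e ee_split lerDl; exact: (ee_ge0 (chi_meas n) d (homog1 n) (homog2 n)).
have cb n : `|q n - p n ^+ 2| <= 2 * e n + 2 * ((m n).+2)%:R^-1.
  exact: (c_bound (chi_meas n) d (homog1 n) (homog2 n) L).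
split.
- move=> H.
  have hb (eps : R) : 0 < eps ->
      (fun n => fine (P [set w | eps < `| Pfrac (chi n) d w - L |])) @ \oo --> 0.
    by move=> e0; apply/EFin_cvgE; rewrite -(G3 eps); exact: H.
  have he : e @ \oo --> 0.
    apply/cvgr0Pnorm_le => dl dl0.
    pose C := (1 + `|L|) ^+ 2.
    have C0 : 0 < C by rewrite /C exprn_gt0 //; have := normr_ge0 L; lra.
    pose eps := Order.min (dl / 2) 1.
    have e0 : 0 < eps by rewrite /eps lt_min ltr01 andbT divr_gt0.
    have h1 : eps <= dl / 2 by rewrite /eps ge_min lexx.
    have h2 : eps <= 1 by rewrite /eps ge_min lexx orbT.
    have eps2 : eps ^+ 2 <= dl / 2 by rewrite GRing.expr2; nra.
    have Hn : \forall n \near \oo,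
        `|fine (P [set w | eps < `| Pfrac (chi n) d w - L |])| <= dl / 2 / C.
      apply: (proj1 (cvgr0Pnorm_le _) (hb eps e0)).
      exact: (divr_gt0 (divr_gt0 dl0 (ltr0Sn _ 1)) C0).
    apply: filterS Hn => n hn.
    rewrite ger0_norm; last exact: eg.
    apply: le_trans (cheb_rev (chi_meas n) d (homog1 n) (homog2 n) L e0) _.
    have hb' := le_trans (ler_norm _) hn.
    rewrite ler_pdivlMr // in hb'.
    rewrite -/C; lra.
  have hp : p @ \oo --> L.
    apply/cvgrPdist_le => dl dl0.
    have Hn : \forall n \near \oo, `|e n| <= dl ^+ 2.
      exact: (proj1 (cvgr0Pnorm_le e) he (dl ^+ 2) (exprn_gt0 _ dl0)).
    apply: filterS Hn => n hn.
    rewrite distrC; apply: norm_le_of_sq; first exact: ltW.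
    exact: le_trans (es n) (le_trans (ler_norm _) hn).
  split.
  + by rewrite G1; apply/EFin_cvgE.
  + rewrite G2; apply/EFin_cvgE.
    apply: (cvg0_le (v := fun n => 2 * e n + 2 * ((m n).+2)%:R^-1)).
      by apply: nearW => n; exact: cb.
    by apply: cvg0D; apply: cvg0Mc.
- move=> [Hp Hc].
  have hp : p @ \oo --> L by apply/EFin_cvgE; rewrite -G1.
  have hc : (fun n => q n - p n ^+ 2) @ \oo --> 0 by apply/EFin_cvgE; rewrite -G2.
  have he : e @ \oo --> 0.
    apply: (cvg0_le (v := fun n => (p n - L) ^+ 2 + ((m n).+2)%:R^-1 + `|q n - p n ^+ 2|)).
      by apply: nearW => n; rewrite ger0_norm ?eg //; exact: eb.
    apply: cvg0D; last exact: cvg0N.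
    apply: cvg0D => //.
    have hpl : (fun n => p n - L) @ \oo --> 0 by apply/subr_cvg0.
    have -> : (fun n => (p n - L) ^+ 2) = (fun n => (p n - L) * (p n - L)).
      by apply/funext => n; rewrite GRing.expr2.
    exact: cvg0M.
  move=> eps e0.
  rewrite (G3 eps); apply/EFin_cvgE.
  apply: (cvg0_le (v := fun n => (eps ^+ 2)^-1 * e n)); last exact: cvg0Mc.
  apply: nearW => n.
  have := markov_ee (chi_meas n) d (homog1 n) (homog2 n) L e0.
  rewrite -[P _](fineK (fin_num_measure P _ (mBn eps n))) -EFinM lee_fin => h.
  rewrite ger0_norm ?fine_ge0 //.
  - by rewrite mulrC ler_pdivlMr ?exprn_gt0 // mulrC.
  - by rewrite fineK ?fin_num_measure //; exact: measure_ge0.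
Qed.
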